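(* Let $q > 5$ be a Sophie Germain prime, let $p = 2q+1$, and suppose $z(p) \mid \pi(q)$. Then $\pi(q)/z(p)$ is an odd integer.
   Context: A Sophie Germain prime is a prime $q$ with $2q+1$ prime. $F_n$ denotes the $n$-th Fibonacci number ($F_0=0$, $F_1=1$). For a prime $p$, $z(p)$ is the least positive integer $k$ with $p \mid F_k$. $\pi(n)$ is the Pisano period, the least period of $(F_m \bmod n)_{m\ge0}$. *)

(* Defs.v *)
From mathcomp Require Import all_boot.
Set Implicit Arguments. Unset Strict Implicit. Unset Printing Implicit Defensive.

Fixpoint fib_aux (n : nat) : nat * nat :=
  match n with
  | 0 => (0, 1)
  | n'.+1 => let: (a, b) := fib_aux n' in (b, a + b)
  end.
Definition fib (n : nat) : nat := (fib_aux n).1.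

Definition sophie_germain (q : nat) : Prop := prime q /\ prime (2 * q + 1).

Definition fib_period (n k : nat) : Prop :=
  forall m, fib (m + k) %% n = fib m %% n.

Definition is_entry_point (p k : nat) : Prop :=
  0 < k /\ p %| fib k /\ (forall j, 0 < j -> p %| fib j -> k <= j).

Definition is_pisano (n k : nat) : Prop :=
  0 < k /\ fib_period n k /\ (forall j, 0 < j -> fib_period n j -> k <= j).

(* Main.v *)
Require Import Defs.
From mathcomp Require Import all_boot all_order all_algebra finfield.
From mathcomp Require Import ring zify.
Set Implicit Arguments. Unset Strict Implicit. Unset Printing Implicit Defensive.
Import GRing.Theory.

Lemma fibS n : fib n.+1 = (fib_aux n).2.
Proof. by rewrite /fib /=; case: (fib_aux n). Qed.

Lemma fibSS n : fib n.+2 = fib n.+1 + fib n.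
Proof.
rewrite fibS /= fibS /fib; case: (fib_aux n) => a b /=; by rewrite addnC.
Qed.

Lemma fib0 : fib 0 = 0. Proof. by []. Qed.
Lemma fib1 : fib 1 = 1. Proof. by []. Qed.
Lemma fib2 : fib 2 = 1. Proof. by []. Qed.
Lemma fib3 : fib 3 = 2. Proof. by []. Qed.
Lemma fib4 : fib 4 = 3. Proof. by []. Qed.

Lemma fibD m n : fib (m + n).+1 = fib m.+1 * fib n.+1 + fib m * fib n.
Proof.
elim: m n => [|m IH] n; first by rewrite add0n fib1 mul1n fib0 mul0n addn0.
rewrite addSnnS IH !fibSS mulnDr mulnDl; lia.
Qed.

Lemma period_mul n a t : fib_period n a -> fib_period n (t * a).
Proof.
move=> Ha m; elim: t => [|t IH]; first by rewrite mul0n addn0.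
by rewrite mulSn addnCA addnC Ha.
Qed.

Lemma pisano_dvd n k j : is_pisano n k -> 0 < j -> fib_period n j -> k %| j.
Proof.
move=> [k0 [Pk Hmin]] j0 Pj.
have Pr : fib_period n (j %% k).
  move=> m; rewrite -(period_mul (j %/ k) Pk (m + j %% k)) -addnA (addnC (j %% k)).
  by rewrite -divn_eq Pj.
have [H0|hpos] := posnP (j %% k); first by apply/eqP.
have := Hmin _ hpos Pr; by rewrite leqNgt ltn_pmod.
Qed.

Section Fp.
Variable r : nat.
Hypothesis pr : prime r.
Local Notation F := 'F_r.
Local Open Scope ring_scope.
Definition f n : F := (fib n)%:R.

Lemma fS n : f n.+2 = f n.+1 + f n.
Proof. by rewrite /f fibSS natrD. Qed.

Lemma f0 : f 0 = 0. Proof. by rewrite /f fib0. Qed.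
Lemma f1 : f 1 = 1. Proof. by rewrite /f fib1. Qed.

Lemma f_shift k m : f k = 0 -> f (m + k) = f m * f k.+1.
Proof.
case: m => [|m] Hk; first by rewrite add0n f0 mul0r.
by rewrite addSn /f fibD natrD !natrM -/(f k) Hk mulr0 addr0.
Qed.

Lemma f_nz n : f n = 0 -> f n.+1 = 0 -> False.
Proof.
elim: n => [|n IH] H0 H1; first by move: H1; rewrite f1 => /eqP; rewrite oner_eq0.
apply: IH => //; by move: (fS n); rewrite H0 H1 add0r => <-.
Qed.

Lemma eq_Fp a b : (a %% r = b %% r)%N <-> (a%:R = b%:R :> F).
Proof.
split => H; first by rewrite -(Fp_nat_mod pr a) H Fp_nat_mod.
by rewrite -!(val_Fp_nat pr) H.
Qed.

Lemma dvd_Fp a : (r %| a)%N = (a%:R == 0 :> F).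
Proof. exact: (GRing.dvdn_pcharf (pchar_Fp pr)). Qed.

Lemma period_F k : (forall m, f (m + k) = f m) -> fib_period r k.
Proof. by move=> H m; apply/eq_Fp; exact: H. Qed.

Lemma period_of k : f k = 0 -> f k.+1 = 1 -> fib_period r k.
Proof. by move=> H0 H1; apply: period_F => m; rewrite f_shift // H1 mulr1. Qed.

Lemma period2_of k : f k = 0 -> f k.+1 ^+ 2 = 1 -> fib_period r (2 * k).
Proof.
move=> H0 H1; apply: period_F => m.
by rewrite mul2n -addnn addnA !f_shift // -mulrA -expr2 H1 mulr1.
Qed.

Lemma f_mul zp m t : f zp = 0 -> f (m + t * zp) = f m * f zp.+1 ^+ t.
Proof.
move=> H; elim: t => [|t IH]; first by rewrite mul0n addn0 expr0 mulr1.
by rewrite mulSn addnCA addnC f_shift // IH exprS -mulrA (mulrC (f zp.+1)).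
Qed.

Lemma entry_dvd zp j : is_entry_point r zp -> (r %| fib j)%N -> (zp %| j)%N.
Proof.
move=> [z0 [Hz Hmin]] Hj.
have fz : f zp = 0 by apply/eqP; rewrite -dvd_Fp.
have cnz : f zp.+1 != 0 by apply/eqP => /(f_nz fz).
have : f (j %% zp + j %/ zp * zp) = 0.
  by rewrite addnC -divn_eq; apply/eqP; rewrite -dvd_Fp.
rewrite f_mul // => /eqP; rewrite mulf_eq0 expf_eq0 (negbTE cnz) andbF orbF.
rewrite -dvd_Fp => Hr.
have [H0|hpos] := posnP (j %% zp); first by apply/eqP.
by have := Hmin _ hpos Hr; rewrite leqNgt ltn_pmod.
Qed.

Lemma entry_dvd_conv zp j : is_entry_point r zp -> (zp %| j)%N -> (r %| fib j)%N.
Proof.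
move=> [z0 [Hz Hmin]] /dvdnP [t ->].
have fz : f zp = 0 by apply/eqP; rewrite -dvd_Fp.
rewrite dvd_Fp -/(f _) -[(t * zp)%N]add0n f_mul // f0 mul0r.
Qed.

Definition M : 'M[F]_2 := \matrix_(i, j) f (2 - i - j)%N.

Lemma Mexp n : M ^+ n.+1 = \matrix_(i, j) f (n.+2 - i - j)%N.
Proof.
elim: n => [|n IH]; first by rewrite expr1.
rewrite exprSr IH; apply/matrixP => i j; rewrite !mxE big_ord_recl big_ord1 !mxE /=.
case: i => [[|[|i]] Hi] //; case: j => [[|[|j]] Hj] //=;
  rewrite ?subn0 ?subSS ?subn0 ?f0 ?f1 /f ?fib2 /= ?mulr1 ?mulr0 ?addr0 -?natrD -?fibSS //.
Qed.

Definition S : 'M[F]_2 :=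
  \matrix_(i, j) (if (i == j :> nat) then (if (i == 0%N :> nat) then 1 else -1) else 2).

Lemma S2 : S ^+ 2 = (5 : F)%:M.
Proof.
apply/matrixP => i j; rewrite expr2 !mxE big_ord_recl big_ord1 !mxE /=.
by case: i => [[|[|i]] Hi] //; case: j => [[|[|j]] Hj] //=; ring.
Qed.

Lemma SM : 1 + S = (2 : F) *: M.
Proof.
apply/matrixP => i j; rewrite !mxE /=.
by case: i => [[|[|i]] Hi] //; case: j => [[|[|j]] Hj] //=; rewrite /f ?subn0 ?subSS ?subn0 ?subnn ?fib0 ?fib1 ?fib2; ring.
Qed.

Lemma frob (r5 : (5 < r)%N) :
  (f r.-1 = 0 /\ f r = 1) \/ (f r.+1 = 0 /\ f r = -1).
Proof.
have two0 : (2 : F) != 0.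
  by rewrite -(dvd_Fp 2); apply/negP => /dvdn_leq; lia.
have five0 : (5 : F) != 0.
  by rewrite -(dvd_Fp 5); apply/negP => /dvdn_leq; lia.
have r0 : (0 < r)%N by lia.
have ferm (x : F) : x != 0 -> x ^+ r.-1 = 1.
  move=> xn0; apply: (mulIf xn0); rewrite mul1r -exprSr prednK //.
  by rewrite -[in X in _ = X](expf_card x) card_Fp.
have ferm2 : (2 : F) ^+ r = 2.
  by rewrite -[in X in _ = X](expf_card (2 : F)) card_Fp.
have rodd : odd r by case: (even_prime pr) => // r2; lia.
set k := r./2.
have hr : r = (k.*2).+1 by rewrite -(odd_double_half r) rodd.
set e := (5 : F) ^+ k.
have e2 : e ^+ 2 = 1.
  have hk : (k.*2 = r.-1)%N by move: hr; rewrite -!muln2; lia.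
  by rewrite /e -exprM muln2 hk ferm.
have eE : e = 1 \/ e = -1.
  have : (e - 1) * (e + 1) = 0 by rewrite -subr_sqr e2 expr1n subrr.
  move/eqP; rewrite mulf_eq0 subr_eq0 addr_eq0 => /orP[] /eqP; tauto.
have chR : r \in [pchar 'M[F]_2] := rmorph_pchar (@scalar_mx F 2) (pchar_Fp pr).
have Hf := pFrobenius_autD_comm chR (esym (commr1 S)).
rewrite !pFrobenius_autE expr1n SM exprZn ferm2 in Hf.
have Sr : S ^+ r = e *: S.
  have -> : S ^+ r = S ^+ (k.*2).+1 by congr (GRing.exp _ _).
  rewrite exprSr -muln2 mulnC exprM S2 -rmorphXn -mulmxE mul_scalar_mx.
  by [].
have Mr : M ^+ r = M ^+ r.-1.+1 by congr (GRing.exp _ _); rewrite prednK.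
rewrite Sr Mr Mexp in Hf.
have /matrixP E := Hf.
have E01 := E ord0 ord_max; have E00 := E ord0 ord0; have E11 := E ord_max ord_max.
rewrite !mxE /= in E01 E00 E11.
have a1 : (r.-1.+2 - 0 - 1 = r)%N by lia.
have a0 : (r.-1.+2 - 0 - 0 = r.+1)%N by lia.
have a2 : (r.-1.+2 - 1 - 1 = r.-1)%N by lia.
rewrite a1 in E01; rewrite a0 in E00; rewrite a2 in E11.
case: eE => He; rewrite He in E01 E00 E11; [left|right]; split;
  apply: (mulfI two0); rewrite ?E01 ?E00 ?E11; ring.
Qed.


Lemma no_sqrt_m1 q (hr : r = (2 * q + 1)%N) (oq : odd q) (x : F) : x ^+ 2 = -1 -> False.
Proof.
move=> hx.
have two0 : (2 : F) != 0.
  by rewrite -(dvd_Fp 2); apply/negP => /dvdn_leq; rewrite hr; case: q oq hr {hx} => //= q' _ _; lia.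
have x0 : x != 0.
  apply/eqP => x0; move: hx; rewrite x0 expr0n /= => /eqP; rewrite eq_sym oppr_eq0 oner_eq0.
  done.
have : x ^+ (2 * q).+1 = x.
  rewrite -{2}(expf_card x) card_Fp //; congr (GRing.exp _ _); by rewrite hr addn1.
rewrite exprS exprM hx -signr_odd oq expr1.
move=> h; have : (x * 2 = 0).
  rewrite (_ : 2 = 1 + 1) // mulrDr mulr1; apply/eqP; rewrite addr_eq0; apply/eqP.
  by rewrite -{1}h mulrN1.
by move/eqP; rewrite mulf_eq0 (negbTE x0) (negbTE two0).
Qed.

End Fp.

Theorem theorem6p2 (q zp piq : nat) :
  sophie_germain q -> 5 < q ->
  is_entry_point (2 * q + 1) zp -> is_pisano q piq ->
  zp %| piq -> odd (piq %/ zp).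
Proof.
move=> [pq pp] q5 Ez Pi dz.
set p := (2 * q + 1)%N in pp Ez *.
have p5 : 5 < p by rewrite /p; lia.
have [z0 [pz _]] := Ez.
have [pi0 _] := Pi.
have hz j : p %| fib j -> zp %| j := entry_dvd pp Ez.
have hpi j : 0 < j -> fib_period q j -> piq %| j := pisano_dvd Pi.
have small : ~ zp %| 4.
  move=> H; have zle : zp <= 4 := dvdn_leq (isT : 0 < 4) H.
  have [f3 f0] : fib zp <= 3 /\ 0 < fib zp.
    by move: zle z0; case: (zp) => [|[|[|[|[|]]]]].
  have := dvdn_leq f0 pz; lia.
have oq : odd q by case: (even_prime pq) => // q2; lia.
have [[qa1 qa2]|[qb1 qb2]] := frob pq q5.
- have Pq : fib_period q q.-1 by apply: period_of => //; rewrite prednK //; lia.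
  have dq : zp %| q.-1 by apply: dvdn_trans dz (hpi _ _ Pq); lia.
  have [[pa1 pa2]|[pb1 pb2]] := frob pp p5.
  + have d1 : zp %| p.-1 by apply: hz; rewrite dvd_Fp // -/(f p _) pa1.
    exfalso; apply: small; apply: (@dvdn_trans 2) => //.
    have -> : 2 = p.-1 - 2 * q.-1 by rewrite /p; lia.
    by apply: dvdn_sub => //; apply: dvdn_mull.
  + have d1 : zp %| p.+1 by apply: hz; rewrite dvd_Fp // -/(f p _) pb1.
    exfalso; apply: small.
    have -> : 4 = p.+1 - 2 * q.-1 by rewrite /p; lia.
    by apply: dvdn_sub => //; apply: dvdn_mull.
- have Pq : fib_period q (2 * q.+1).
    apply: period2_of => //; rewrite fS qb1 qb2 add0r; by rewrite sqrrN expr1n.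
  have dq : piq %| 2 * q.+1 by apply: hpi Pq; lia.
  have [[pa1 pa2]|[pb1 pb2]] := frob pp p5.
  + have d1 : zp %| p.-1 by apply: hz; rewrite dvd_Fp // -/(f p _) pa1.
    exfalso; apply: small; apply: (@dvdn_trans 2) => //.
    have -> : 2 = 2 * q.+1 - p.-1 by rewrite /p; lia.
    by apply: dvdn_sub => //; apply: dvdn_trans dz dq.
  + have nd : ~ zp %| q.+1.
      move=> H; have := entry_dvd_conv pp Ez H; rewrite dvd_Fp // -/(f p _) => /eqP h.
      apply: (@no_sqrt_m1 p pp q erefl oq (f p q)).
      have hpp : fib p = fib (q + q).+1 by rewrite /p addn1 mul2n addnn.
      rewrite -pb2 /f hpp fibD natrD !natrM; move: h; rewrite /f => ->.
      by rewrite mul0r add0r expr2.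
    case/dvdnP: dz => t ht; rewrite ht mulnK //.
    apply/negP => /negP; rewrite -dvdn2 => /dvdnP [u hu].
    apply: nd; have : 2 * (u * zp) %| 2 * q.+1.
      by rewrite (_ : 2 * (u * zp) = piq) // ht hu; nia.
    rewrite dvdn_pmul2l // => h; apply: dvdn_trans h; exact: dvdn_mull.
Qed.
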